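(* Let $t>0$ and $k>1$ be constants, and let $p_0,p_1,p_2,p_3$ be real numbers with $0<p_i<1$ and $\sum_{i=0}^{3}p_i=1$. Define $T(n,r)$ for real $n\ge 0$ and integers $r\ge 0$ by $$T(n,r)=\begin{cases}1 & \text{if } n\le t k^r,\\ 1+\sum_{i=0}^{3} T\big(p_i(n-tk^r),\,r+1\big) & \text{if } n> t k^r.\end{cases}$$ Then, as $N\to\infty$, $T(N,0)\in\Theta(N^s)$, where $s$ is the real solution of $\sum_{i=0}^{3}p_i^s=k^s$.
   Context: $T(N,0)$ is the asymptotic space (number of counters) used by a DN-tree with parameters $k$ and $t$ after recording $N$ extent accesses: a tree vertex at level $r$ saturates at threshold $tk^r$, after which further accesses are distributed among its four children with probabilities $p_0,\dots,p_3$ (an R-MAT-type distribution). The parameters $t,k,p_i$ are fixed as $N\to\infty$. *)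

(* Defs.v *)
From Stdlib Require Import Reals.
Open Scope R_scope.

Definition DN_space (t k : R) (p : nat -> R) (T : R -> nat -> R) : Prop :=
  forall (n : R) (r : nat), 0 <= n ->
    (n <= t * k ^ r -> T n r = 1) /\
    (t * k ^ r < n ->
       T n r = 1 + sum_f_R0 (fun i => T (p i * (n - t * k ^ r)) (S r)) 3).

(* Main.v *)
Require Import Defs.
From Stdlib Require Import Reals Lra Lia.
Open Scope R_scope.

Lemma exp_ge1 x : 0 <= x -> 1 <= exp x.
Proof. intros; pose proof (exp_ineq1_le x); lra. Qed.

Lemma exp_le1 x : x <= 0 -> exp x <= 1.
Proof.
  intros. destruct (Rle_lt_or_eq_dec _ _ H).
  - left. rewrite <- exp_0. apply exp_increasing; lra.
  - subst; rewrite exp_0; lra.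
Qed.

Lemma tree_ind (t k : R) (p : nat -> R) (P : R -> nat -> Prop) :
  0 < t -> 1 < k -> (forall i, (i <= 3)%nat -> 0 < p i < 1) ->
  (forall n r, 0 <= n -> n <= t * k ^ r -> P n r) ->
  (forall n r, 0 <= n -> t * k ^ r < n ->
     (forall i, (i <= 3)%nat -> P (p i * (n - t * k ^ r)) (S r)) -> P n r) ->
  forall n r, 0 <= n -> P n r.
Proof.
  intros Ht Hk Hp Hb Hs.
  assert (G : forall j n r, 0 <= n -> n <= INR j * t * k ^ r -> P n r).
  { induction j; intros n r Hn Hnj.
    - apply Hb; auto. simpl in Hnj. pose proof (pow_lt k r). 
      assert (0 < t * k^r) by (apply Rmult_lt_0_compat; lra). nra.
    - destruct (Rle_lt_dec n (t * k ^ r)) as [h|h]; [apply Hb; auto|].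
      apply Hs; auto. intros i Hi. specialize (Hp i Hi).
      assert (0 < k ^ r) by (apply pow_lt; lra).
      assert (0 <= INR j) by apply pos_INR.
      rewrite S_INR in Hnj.
      apply IHj.
      + apply Rmult_le_pos; nra.
      + simpl. assert (0 <= INR j * t * k ^ r) by (apply Rmult_le_pos; nra).
        nra. }
  intros n r Hn.
  assert (0 < t * k ^ r) by (apply Rmult_lt_0_compat; [lra|apply pow_lt; lra]).
  destruct (INR_archimed (t * k ^ r) n) as [j Hj]; auto.
  apply (G j); auto. rewrite Rmult_assoc; lra.
Qed.

Lemma sum4 (f : nat -> R) : sum_f_R0 f 3 = f 0%nat + f 1%nat + f 2%nat + f 3%nat.
Proof. simpl. ring. Qed.

Theorem theorem1 (t k : R) (p : nat -> R) (T : R -> nat -> R) (s : R) :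
  0 < t -> 1 < k ->
  (forall i, (i <= 3)%nat -> 0 < p i < 1) ->
  sum_f_R0 p 3 = 1 ->
  DN_space t k p T ->
  sum_f_R0 (fun i => Rpower (p i) s) 3 = Rpower k s ->
  exists c1 c2 N0 : R, 0 < c1 /\ 0 < c2 /\ 0 < N0 /\
    forall N : R, N0 <= N ->
      c1 * Rpower N s <= T N 0%nat <= c2 * Rpower N s.
Proof.
  intros Ht Hk Hp Hsum HT Hs.
  assert (Hpos : forall x y, 0 < x -> 0 < Rpower x y) by (intros; unfold Rpower; apply exp_pos).
  assert (Hs0 : 0 < s).
  { destruct (Rlt_le_dec 0 s) as [h|h]; auto. exfalso.
    assert (A : forall i, (i <= 3)%nat -> 1 <= Rpower (p i) s).
    { intros i Hi. specialize (Hp i Hi). unfold Rpower. apply exp_ge1.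
      assert (ln (p i) < 0) by (rewrite <- ln_1; apply ln_increasing; lra). nra. }
    assert (Rpower k s <= 1).
    { unfold Rpower. apply exp_le1.
      assert (0 < ln k) by (rewrite <- ln_1; apply ln_increasing; lra). nra. }
    rewrite sum4 in Hs.
    pose proof (A 0%nat ltac:(auto)); pose proof (A 1%nat ltac:(auto));
    pose proof (A 2%nat ltac:(auto)); pose proof (A 3%nat ltac:(auto)). lra. }
  set (q := fun i => p i / k).
  assert (Hq : forall i, (i <= 3)%nat -> 0 < q i /\ q i * k = p i /\ q i <= / k).
  { intros i Hi. specialize (Hp i Hi). unfold q. split; [apply Rdiv_lt_0_compat; lra|].
    split; [field; lra|]. unfold Rdiv. assert (0 < / k) by (apply Rinv_0_lt_compat; lra). nra. }
  assert (Hqs : Rpower (q 0%nat) s + Rpower (q 1%nat) s + Rpower (q 2%nat) s + Rpower (q 3%nat) s = 1).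
  { assert (E : forall i, (i <= 3)%nat -> Rpower (p i) s = Rpower (q i) s * Rpower k s).
    { intros i Hi. destruct (Hq i Hi) as [h1 [h2 _]]. rewrite <- h2.
      rewrite Rpower_mult_distr; auto; lra. }
    rewrite sum4 in Hs. rewrite (E 0%nat), (E 1%nat), (E 2%nat), (E 3%nat) in Hs; auto.
    assert (0 < Rpower k s) by (apply Hpos; lra).
    apply (Rmult_eq_reg_r (Rpower k s)); nra. }
  set (pm := Rmin (Rmin (p 0%nat) (p 1%nat)) (Rmin (p 2%nat) (p 3%nat))).
  assert (Hpm : 0 < pm /\ forall i, (i <= 3)%nat -> pm <= p i).
  { unfold pm. pose proof (Hp 0%nat ltac:(auto)); pose proof (Hp 1%nat ltac:(auto));
    pose proof (Hp 2%nat ltac:(auto)); pose proof (Hp 3%nat ltac:(auto)).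
    split.
    - repeat apply Rmin_glb_lt; lra.
    - intros i Hi. destruct i as [|[|[|[|i]]]]; try lia.
      + eapply Rle_trans; [apply Rmin_l|apply Rmin_l].
      + eapply Rle_trans; [apply Rmin_l|apply Rmin_r].
      + eapply Rle_trans; [apply Rmin_r|apply Rmin_l].
      + eapply Rle_trans; [apply Rmin_r|apply Rmin_r]. }
  destruct Hpm as [Hpm0 Hpmi].
  set (c := t * pm / k).
  set (d := t / (k - 1)).
  assert (Hc : 0 < c) by (unfold c; apply Rdiv_lt_0_compat; nra).
  assert (Hd : 0 < d) by (unfold d; apply Rdiv_lt_0_compat; lra).
  assert (Hci : forall i, (i <= 3)%nat -> c * (1 - q i) <= q i * t).
  { intros i Hi. destruct (Hq i Hi) as [h1 [h2 h3]]. pose proof (Hpmi i Hi).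
    assert (c <= q i * t).
    { unfold c, q. unfold Rdiv. 
      assert (0 < / k) by (apply Rinv_0_lt_compat; lra).
      assert (pm * / k <= p i * / k) by nra.
      replace (t * pm * / k) with (t * (pm * / k)) by ring.
      replace (p i * / k * t) with (t * (p i * / k)) by ring. nra. }
    nra. }
  assert (Hdi : forall i, (i <= 3)%nat -> q i * t <= d * (1 - q i)).
  { intros i Hi. destruct (Hq i Hi) as [h1 [h2 h3]].
    assert (d * (k - 1) = t) by (unfold d; field; lra).
    assert (0 < / k) by (apply Rinv_0_lt_compat; lra).
    assert (/ k * k = 1) by (field; lra).
    assert (d * (1 - / k) = t * / k) by (unfold d; field; lra).
    assert (d * (1 - q i) >= d * (1 - / k)) by nra.
    assert (q i * t <= t * / k) by nra. lra. }
  set (A := 2 / Rpower c s).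
  set (a := 1 / Rpower (t + d) s).
  assert (HA : A * Rpower c s = 2) by (unfold A; field; apply Rgt_not_eq, Hpos; lra).
  assert (Ha : a * Rpower (t + d) s = 1) by (unfold a; field; apply Rgt_not_eq, Hpos; lra).
  assert (HA0 : 0 < A) by (unfold A; apply Rdiv_lt_0_compat; [lra|apply Hpos; lra]).
  assert (Ha0 : 0 < a) by (unfold a; apply Rdiv_lt_0_compat; [lra|apply Hpos; lra]).
  assert (Inv : forall n r, 0 <= n ->
     1 <= T n r /\ a * Rpower (n / k ^ r + d) s - 1/3 <= T n r /\
     T n r <= A * Rpower (n / k ^ r + c) s - 1).
  { apply (tree_ind t k p); auto.
    - intros n r Hn Hnr. destruct (HT n r Hn) as [H1 _]. rewrite (H1 Hnr).
      assert (0 < k ^ r) by (apply pow_lt; lra).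
      assert (0 <= n / k ^ r) by (apply Rmult_le_pos; [lra| left; apply Rinv_0_lt_compat; lra]).
      assert (n / k ^ r <= t).
      { apply (Rmult_le_reg_r (k ^ r)); auto. unfold Rdiv. rewrite Rmult_assoc, Rinv_l; lra. }
      split; [lra|split].
      + assert (Rpower (n / k ^ r + d) s <= Rpower (t + d) s) by (apply Rle_Rpower_l; lra). nra.
      + assert (Rpower c s <= Rpower (n / k ^ r + c) s) by (apply Rle_Rpower_l; lra). nra.
    - intros n r Hn Hnr IH. destruct (HT n r Hn) as [_ H2]. rewrite (H2 Hnr), sum4.
      assert (0 < k ^ r) by (apply pow_lt; lra).
      set (m := n / k ^ r).
      assert (Hm : t < m).
      { unfold m. apply (Rmult_lt_reg_r (k ^ r)); auto. unfold Rdiv. rewrite Rmult_assoc, Rinv_l; lra. }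
      assert (Hch : forall i, (i <= 3)%nat -> p i * (n - t * k ^ r) / k ^ S r = q i * (m - t)).
      { intros i Hi. unfold m, q. simpl. field. split; lra. }
      assert (Up : forall i, (i <= 3)%nat ->
        T (p i * (n - t * k ^ r)) (S r) <= A * (Rpower (q i) s * Rpower (m + c) s) - 1).
      { intros i Hi. destruct (IH i Hi) as [_ [_ U]]. rewrite Hch in U; auto.
        destruct (Hq i Hi) as [h1 _]. pose proof (Hci i Hi).
        rewrite Rpower_mult_distr; try lra.
        assert (Rpower (q i * (m - t) + c) s <= Rpower (q i * (m + c)) s).
        { apply Rle_Rpower_l; [lra|]. split; nra. }
        nra. }
      assert (Lo : forall i, (i <= 3)%nat ->
        a * (Rpower (q i) s * Rpower (m + d) s) - 1/3 <= T (p i * (n - t * k ^ r)) (S r)).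
      { intros i Hi. destruct (IH i Hi) as [_ [L _]]. rewrite Hch in L; auto.
        destruct (Hq i Hi) as [h1 _]. pose proof (Hdi i Hi).
        rewrite Rpower_mult_distr; try lra.
        assert (Rpower (q i * (m + d)) s <= Rpower (q i * (m - t) + d) s).
        { apply Rle_Rpower_l; [lra|]. split; nra. }
        nra. }
      assert (One : forall i, (i <= 3)%nat -> 1 <= T (p i * (n - t * k ^ r)) (S r)).
      { intros i Hi. apply (IH i Hi). }
      pose proof (Up 0%nat ltac:(auto)); pose proof (Up 1%nat ltac:(auto));
      pose proof (Up 2%nat ltac:(auto)); pose proof (Up 3%nat ltac:(auto)).
      pose proof (Lo 0%nat ltac:(auto)); pose proof (Lo 1%nat ltac:(auto));
      pose proof (Lo 2%nat ltac:(auto)); pose proof (Lo 3%nat ltac:(auto)).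
      pose proof (One 0%nat ltac:(auto)); pose proof (One 1%nat ltac:(auto));
      pose proof (One 2%nat ltac:(auto)); pose proof (One 3%nat ltac:(auto)).
      assert (E1 : A * (Rpower (q 0%nat) s * Rpower (m + c) s) + A * (Rpower (q 1%nat) s * Rpower (m + c) s)
        + A * (Rpower (q 2%nat) s * Rpower (m + c) s) + A * (Rpower (q 3%nat) s * Rpower (m + c) s)
        = A * Rpower (m + c) s).
      { rewrite <- (Rmult_1_l (Rpower (m + c) s)) at 5. rewrite <- Hqs. ring. }
      assert (E2 : a * (Rpower (q 0%nat) s * Rpower (m + d) s) + a * (Rpower (q 1%nat) s * Rpower (m + d) s)
        + a * (Rpower (q 2%nat) s * Rpower (m + d) s) + a * (Rpower (q 3%nat) s * Rpower (m + d) s)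
        = a * Rpower (m + d) s).
      { rewrite <- (Rmult_1_l (Rpower (m + d) s)) at 5. rewrite <- Hqs. ring. }
      split; [lra | split; lra]. }
  exists (3 / 4 * a), (A * Rpower 2 s), c.
  split; [lra|]. split; [apply Rmult_lt_0_compat; [lra|apply Hpos; lra]|]. split; [lra|].
  intros N HN. destruct (Inv N 0%nat ltac:(lra)) as [I1 [I2 I3]].
  simpl in I2, I3. replace (N / 1) with N in I2, I3 by field.
  split.
  - assert (Rpower N s <= Rpower (N + d) s) by (apply Rle_Rpower_l; lra). nra.
  - assert (Rpower (N + c) s <= Rpower (2 * N) s) by (apply Rle_Rpower_l; lra).
    rewrite <- Rpower_mult_distr in H; try lra. nra.
Qed.
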